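(* Let $(M_1,M_2)$ be a state of a duplex network. Every shortest CLAP admits a choice of witness alternating paths that are pairwise edge-disjoint within each layer; consequently, the batched symmetric-difference operation (replacing each $M_\ell$ by $M_\ell\triangle\bigcup E(p)$, the union over the witness paths $p$ of the layer-$\ell$ segments) is well-defined.
   Context: A duplex network consists of directed graphs $G_1=(V,E_1)$, $G_2=(V,E_2)$ on a common finite node set $V$. For $\ell\in\{1,2\}$, $\mathcal B_\ell$ is the bipartite graph with vertex classes $V^+=\{v^+\}$, $V^-=\{v^-\}$ and an edge $\{u^+,v^-\}$ for each $(u,v)\in E_\ell$. A state is a pair of matchings $M_\ell$ in $\mathcal B_\ell$; $D_\ell=\{v\in V: v^-\text{ uncovered by }M_\ell\}$, $\mathrm{DD}_1=D_1\setminus D_2$, $\mathrm{DD}_2=D_2\setminus D_1$. An admissible segment $(u\xrightarrow{\ell}v)$ requires an $M_\ell$-alternating path (simple path in $\mathcal B_\ell$ alternating between $M_\ell$ and non-$M_\ell$ edges) between $u^-$ and $v^-$, called a witness path, and: for $\ell=1$, $u\in D_1$, $v\notin D_1$; for $\ell=2$, $u\notin D_2$, $v\in D_2$. A CLAP is a sequence of admissible segments $v_0\xrightarrow{\ell_1}v_1\cdots\xrightarrow{\ell_k}v_k$ with $v_0\in\mathrm{DD}_1$, $v_k\in\mathrm{DD}_2$, $\ell_{i+1}\ne\ell_i$ for all $i$, and $v_0,\dots,v_k$ pairwise distinct; a shortest CLAP is one with the minimum number $k$ of segments. *)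

(* Defs.v *)
From mathcomp Require Import all_boot.
Set Implicit Arguments. Unset Strict Implicit. Unset Printing Implicit Defensive.

Inductive layer : Type := L1 | L2.

Section Duplex.
Variable V : finType.

(* Vertices of the bipartite graph B_l: inl v = v^+, inr v = v^-. *)
Definition bvert := (V + V)%type.

(* The edge {u^+, v^-} of B_l is encoded by the directed pair (u, v). *)
Definition bedge (x y : bvert) : option (V * V) :=
  match x, y with
  | inl u, inr v => Some (u, v)
  | inr v, inl u => Some (u, v)
  | _, _ => None
  end.

Definition badj (E : rel V) (x y : bvert) : bool :=
  if bedge x y is Some e then E e.1 e.2 else false.

Definition is_matching (E : rel V) (M : {set V * V}) : Prop :=
  (forall e, e \in M -> E e.1 e.2) /\
  (forall e f, e \in M -> f \in M -> e.1 = f.1 -> e = f) /\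
  (forall e f, e \in M -> f \in M -> e.2 = f.2 -> e = f).

Definition Dset (M : {set V * V}) : {set V} :=
  [set v | [forall u, (u, v) \notin M]].

Definition path_edges (x0 : bvert) (s : seq bvert) : seq (V * V) :=
  pmap id (pairmap bedge x0 s).

Definition alt_path (E : rel V) (M : {set V * V}) (x0 : bvert) (s : seq bvert)
  : Prop :=
  [/\ path (badj E) x0 s, uniq (x0 :: s) &
      sorted (fun e f => (e \in M) != (f \in M)) (path_edges x0 s)].

Variables (E1 E2 : rel V) (M1 M2 : {set V * V}).

Definition Elay (l : layer) : rel V := if l is L1 then E1 else E2.
Definition Mlay (l : layer) : {set V * V} := if l is L1 then M1 else M2.
Definition Dlay (l : layer) : {set V} := Dset (Mlay l).

Definition DD1 : {set V} := Dlay L1 :\: Dlay L2.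
Definition DD2 : {set V} := Dlay L2 :\: Dlay L1.

(* A witness path for (u -l-> v): an M_l-alternating path between u^- and
   v^-, given as the tail s of the vertex sequence inr u :: s. *)
Definition witness (l : layer) (u v : V) (s : seq bvert) : Prop :=
  alt_path (Elay l) (Mlay l) (inr u) s /\ last (inr u) s = inr v.

Definition layer_cond (l : layer) (u v : V) : Prop :=
  match l with
  | L1 => u \in Dlay L1 /\ v \notin Dlay L1
  | L2 => u \notin Dlay L2 /\ v \in Dlay L2
  end.

Definition admissible (l : layer) (u v : V) : Prop :=
  (exists s, witness l u v s) /\ layer_cond l u v.

(* A CLAP v0 -l_1-> v1 ... -l_k-> vk, given by v0, vs = [v1;...;vk] and
   ls = [l_1;...;l_k]. The i-th node is nth v0 (v0 :: vs) i. *)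
Definition is_CLAP (v0 : V) (vs : seq V) (ls : seq layer) : Prop :=
  [/\ size vs = size ls,
      v0 \in DD1 /\ last v0 vs \in DD2,
      (forall i, i < size ls ->
         admissible (nth L1 ls i) (nth v0 (v0 :: vs) i) (nth v0 (v0 :: vs) i.+1)),
      (forall i, i.+1 < size ls -> nth L1 ls i.+1 <> nth L1 ls i) &
      uniq (v0 :: vs)].

Definition is_shortest_CLAP (v0 : V) (vs : seq V) (ls : seq layer) : Prop :=
  is_CLAP v0 vs ls /\
  forall v0' vs' ls', is_CLAP v0' vs' ls' -> size ls <= size ls'.

End Duplex.

(* Main.v *)
Require Import Defs.
From mathcomp Require Import all_boot zify.
Set Implicit Arguments. Unset Strict Implicit. Unset Printing Implicit Defensive.

Section Aux.
Variable V : finType.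
Implicit Types (x y z : bvert V) (s : seq (bvert V)) (E : rel V) (M : {set V * V}).

Definition inM M x y := if bedge x y is Some e then e \in M else false.
Definition isl x := if x is inl _ then true else false.
Definition Rt E M (c : bool) := fun x y => badj E x y && (inM M x y == (isl x (+) c)).
Definition altr M := fun e f : V * V => (e \in M) != (f \in M).

Lemma bedge_adj E x y : badj E x y -> exists e, bedge x y = Some e.
Proof. by rewrite /badj; case: (bedge x y) => // e _; exists e. Qed.

Lemma pe_cons x y s e : bedge x y = Some e -> path_edges x (y::s) = e :: path_edges y s.
Proof. by move=> H; rewrite /path_edges /= H. Qed.

Lemma inM_some M x y e : bedge x y = Some e -> inM M x y = (e \in M).
Proof. by move=> H; rewrite /inM H. Qed.

Lemma adj_isl E x y : badj E x y -> isl y = ~~ isl x.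
Proof. by case: x y => [?|?] [?|?]. Qed.

Lemma altA E M c x0 y s : path (badj E) x0 (y::s) -> sorted (altr M) (path_edges x0 (y::s)) ->
  inM M x0 y == isl x0 (+) c -> path (Rt E M c) x0 (y::s).
Proof.
elim: s x0 y => [|z s IH] x0 y /=.
  by rewrite /Rt => /andP[-> _] _ ->.
move=> /andP[a1 /andP[a2 hp]].
have [e1 He1] := bedge_adj a1; have [e2 He2] := bedge_adj a2.
rewrite (pe_cons _ He1) (pe_cons _ He2) /= => /andP[he hs] ht.
rewrite /Rt a1 ht /=; apply: IH => //=.
- by rewrite a2.
- by rewrite (pe_cons _ He2).
rewrite (inM_some _ He2) (adj_isl a1); rewrite (inM_some _ He1) in ht.
move: he ht; rewrite /altr.
by case: (e1 \in M); case: (e2 \in M); case: (isl x0); case: c.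
Qed.

Lemma alt_R E M x0 s : path (badj E) x0 s -> sorted (altr M) (path_edges x0 s) ->
  exists c, path (Rt E M c) x0 s.
Proof.
case: s => [|y s]; first by exists false.
move=> hp hs; exists (inM M x0 y (+) isl x0); apply: altA => //.
by case: (inM M x0 y); case: (isl x0).
Qed.

Lemma R_alt E M c x0 s : path (Rt E M c) x0 s -> sorted (altr M) (path_edges x0 s).
Proof.
elim: s x0 => [|y s IH] x0 //= /andP[r1 hp].
have IHy := IH _ hp.
move: r1; rewrite /Rt => /andP[a1 t1].
have [e1 He1] := bedge_adj a1.
rewrite (pe_cons _ He1).
move: IHy; case: s IH hp => [|z s'] _ //= /andP[r2 _].
move: r2; rewrite /Rt => /andP[a2 t2].
have [e2 He2] := bedge_adj a2.
rewrite (pe_cons _ He2) /= => ->; rewrite andbT.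
rewrite (inM_some _ He1) in t1; rewrite (inM_some _ He2) (adj_isl a1) in t2.
move: t1 t2; rewrite /altr.
by case: (e1 \in M); case: (e2 \in M); case: (isl x0); case: c.
Qed.

Lemma pe_mem x0 s e : e \in path_edges x0 s -> inl e.1 \in x0 :: s.
Proof.
elim: s x0 => [|y s IH] x0 //.
rewrite /path_edges /=.
case H: (bedge x0 y) => [e'|] /=.
  rewrite inE => /orP[/eqP -> | /IH]; last by rewrite !inE => /orP[->|->]; rewrite ?orbT.
  by move: H; case: x0 y => [u|u] [v|v] //= [<-]; rewrite !inE eqxx ?orbT.
by move/IH; rewrite !inE => /orP[->|->]; rewrite ?orbT.
Qed.

End Aux.

Section Splice.
Variables (T : eqType) (R : rel T).

Lemma suffix_lem x y0 q : path R y0 q -> uniq (y0::q) -> x \in y0::q ->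
  exists s, [/\ path R x s, uniq (x::s), last x s = last y0 q & {subset s <= q}].
Proof.
elim: q y0 => [|z q IH] y0.
  by rewrite inE => _ _ /eqP ->; exists [::].
move=> /= /andP[r hp] /andP[ny uq].
rewrite inE => /orP[/eqP -> | hx].
  exists (z :: q); split => //=; rewrite ?r ?hp ?ny ?uq //.
have [s [h1 h2 h3 h4]] := IH z hp uq hx.
by exists s; split => // w /h4 hw; rewrite inE hw orbT.
Qed.

Lemma splice y0 q : path R y0 q -> uniq (y0::q) -> forall p x0,
  path R x0 p -> uniq (x0::p) -> has (mem (y0::q)) (x0::p) ->
  exists s, [/\ path R x0 s, uniq (x0::s), last x0 s = last y0 q & {subset s <= p ++ y0::q}].
Proof.
move=> hq uq; elim=> [|y p IH] x0.
  move=> _ _ /= ; rewrite orbF => hx.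
  have [s [h1 h2 h3 h4]] := suffix_lem hq uq hx.
  by exists s; split => // w /h4 hw; rewrite in_cons hw orbT.
case hx: (x0 \in y0 :: q).
  move=> _ _ _; have [s [h1 h2 h3 h4]] := suffix_lem hq uq hx.
  by exists s; split => // w /h4 hw; rewrite mem_cat !in_cons hw !orbT.
move=> /= /andP[r hp] /andP[nx uy] /orP[]; first by rewrite /= hx.
move=> hh; have [s [h1 h2 h3 h4]] := IH y hp uy hh.
exists (y :: s); split => //=; rewrite ?r ?h1 //.
move: h2 => /= /andP[ys us]; rewrite ys us !andbT; apply/negP => hin.
have : x0 \in y :: p ++ y0 :: q.
  move: hin; rewrite in_cons => /orP[/eqP ->|/h4]; first by rewrite in_cons eqxx.
  by rewrite in_cons => ->; rewrite orbT.
rewrite in_cons mem_cat => /orP[/eqP e|/orP[hh2|hh2]].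
- by move: nx; rewrite e in_cons eqxx.
- by move: nx; rewrite in_cons hh2 orbT.
- by move: hx; rewrite hh2.
move=> w; rewrite !in_cons => /orP[->//|/h4 ->]; by rewrite orbT.
Qed.
End Splice.

Definition cl (l : layer) := if l is L2 then true else false.

Lemma witness_R (V : finType) (E1 E2 : rel V) (M1 M2 : {set V * V}) l u v s :
  layer_cond M1 M2 l u v -> witness E1 E2 M1 M2 l u v s ->
  path (Rt (Elay E1 E2 l) (Mlay M1 M2 l) (cl l)) (inr u) s.
Proof.
move=> hc [[hp hu hs] hl].
have [->|sne] := eqVneq s [::]; first by [].
have [c hc'] := alt_R (M := Mlay M1 M2 l) hp hs.
suff <- : c = cl l by [].
case: l hc hp hs hl hc' => [[hu1 _]|[_ hv2]] hp hs hl hc'.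
  case: s sne hu hp hs hl hc' => [|y s] // _ _ hp hs hl hc'.
  move: hc' => /= /andP[/andP[]].
  case: y {hp hs hl} => w //= hE.
  rewrite /inM /=.
  move: hu1; rewrite /Dlay /Dset /= inE => /forallP /(_ w) /negbTE ->.
  by case: c.
case/lastP: s sne hu hp hs hl hc' => [|s y] // _ _ hp hs hl hc'.
move: hc'; rewrite rcons_path => /andP[_ /andP[]].
move: hl; rewrite last_rcons => ->.
case: (last (inr u) s) => w //= hE.
rewrite /inM /=.
move: hv2; rewrite /Dlay /Dset /= inE => /forallP /(_ w) /negbTE ->.
by case: c.
Qed.

Lemma join_witness (V : finType) (E1 E2 : rel V) (M1 M2 : {set V * V}) l a b c d p q e :
  layer_cond M1 M2 l a b -> layer_cond M1 M2 l c d ->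
  witness E1 E2 M1 M2 l a b p -> witness E1 E2 M1 M2 l c d q ->
  e \in path_edges (inr a) p -> e \in path_edges (inr c) q ->
  exists s, witness E1 E2 M1 M2 l a d s.
Proof.
move=> hab hcd wp wq he1 he2.
have hp := witness_R hab wp; have hq := witness_R hcd wq.
case: wp => [[_ up _] _]; case: wq => [[_ uq _] lq].
have hh : has (mem (inr c :: q)) (inr a :: p).
  by apply/hasP; exists (inl e.1); [exact: pe_mem he1 | exact: pe_mem he2].
have [s [h1 h2 h3 _]] := splice hq uq hp up hh.
exists s; split; last by rewrite h3.
split => //; last exact: R_alt h1.
by apply: sub_path h1 => x y /andP[].
Qed.

Lemma shortcut (V : finType) (E1 E2 : rel V) (M1 M2 : {set V * V}) v0 vs ls i j l s :
  is_CLAP E1 E2 M1 M2 v0 vs ls -> i < j -> j < size ls ->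
  nth L1 ls i = l -> nth L1 ls j = l ->
  witness E1 E2 M1 M2 l (nth v0 (v0::vs) i) (nth v0 (v0::vs) j.+1) s ->
  is_CLAP E1 E2 M1 M2 v0 (take i vs ++ drop j vs) (take i ls ++ l :: drop j.+1 ls).
Proof.
case => hsz [h0 hk] hadm halt hu hij hj hli hlj hw.
have hcond : layer_cond M1 M2 l (nth v0 (v0::vs) i) (nth v0 (v0::vs) j.+1).
  have := (hadm i (ltn_trans hij hj)).2; have := (hadm j hj).2.
  rewrite hli hlj; case: l {hli hlj hw} => [[_ ?] [? _]|[_ ?] [? _]]; by split.
have hN : forall m, nth v0 (v0 :: (take i vs ++ drop j vs)) m =
   nth v0 (v0::vs) (if m <= i then m else m + (j - i)).
  case=> [|m] //=.
  rewrite nth_cat size_takel; last by lia.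
  case: ifP => hm; first by rewrite nth_take.
  rewrite nth_drop addSn /=; congr nth; lia.
have hL : forall m, nth L1 (take i ls ++ l :: drop j.+1 ls) m =
   if m < i then nth L1 ls m else if m == i then l else nth L1 ls (m + (j - i)).
  move=> m; rewrite nth_cat size_takel; last by lia.
  case: ifP => hm; first by rewrite nth_take.
  case: eqP => [->|hne]; first by rewrite subnn.
  have -> : m - i = (m - i.+1).+1 by lia.
  rewrite /= nth_drop; congr nth; lia.
have hs' : size (take i ls ++ l :: drop j.+1 ls) = size ls - (j - i).
  rewrite size_cat size_takel /= ?size_drop; lia.
split.
- rewrite hs' size_cat size_takel ?size_drop; lia.
- split => //.
  rewrite (last_nth v0) hN size_cat size_takel ?size_drop; last by lia.
  have -> : (i + (size vs - j) <= i) = false by lia.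
  have -> : i + (size vs - j) + (j - i) = size vs by lia.
  by rewrite -last_nth.
- move=> m; rewrite hs' => hm; rewrite hL !hN.
  case: (ltngtP m i) => hmi.
  + apply: hadm; lia.
  + rewrite addSn; apply: hadm; lia.
  + subst m; rewrite ?ltnn ?eqxx ?leqnn ?ltnn.
    have -> : i.+1 + (j - i) = j.+1 by lia.
    split; first by exists s.
    exact: hcond.
- move=> m; rewrite hs' => hm; rewrite !hL.
  have [hmi|hmi|hmi] := ltngtP m i.
  + have [h2|h2|h2] := ltngtP m.+1 i.
    * apply: halt; lia.
    * lia.
    * rewrite -hli -h2; apply: halt; lia.
  + have -> : (m.+1 < i) = false by lia.
    have -> : (m.+1 == i) = false by lia.
    rewrite addSn; apply: halt; lia.
  + have -> : (m.+1 < i) = false by lia.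
    have -> : (m.+1 == i) = false by lia.
    have -> : m.+1 + (j - i) = j.+1 by lia.
    rewrite -hlj; apply: halt; lia.
- have -> : v0 :: take i vs ++ drop j vs = (v0 :: take i vs) ++ drop j vs by [].
  apply: subseq_uniq hu.
  have E : v0 :: vs = (v0 :: take i vs) ++ drop i vs by rewrite /= cat_take_drop.
  rewrite [X in subseq _ X]E; apply: cat_subseq => //.
  rewrite -(subnK (ltnW hij)) -drop_drop; exact: drop_subseq.
Qed.

Unset Implicit Arguments.
Theorem mainTheorem5 (V : finType) (E1 E2 : rel V) (M1 M2 : {set V * V})
  (hM1 : is_matching E1 M1) (hM2 : is_matching E2 M2)
  (v0 : V) (vs : seq V) (ls : seq layer) :
  is_shortest_CLAP E1 E2 M1 M2 v0 vs ls ->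
  exists ws : seq (seq (bvert V)),
    size ws = size ls /\
    (forall i, i < size ls ->
       witness E1 E2 M1 M2 (nth L1 ls i) (nth v0 (v0 :: vs) i)
         (nth v0 (v0 :: vs) i.+1) (nth [::] ws i)) /\
    (forall i j, i < j -> j < size ls -> nth L1 ls i = nth L1 ls j ->
       forall e,
         e \in path_edges (inr (nth v0 (v0 :: vs) i)) (nth [::] ws i) ->
         e \notin path_edges (inr (nth v0 (v0 :: vs) j)) (nth [::] ws j)).
Proof.
move=> [hC hmin]; have hC' := hC; case: hC' => hsz _ hadm halt hu.
have Hws : forall n, n <= size ls -> exists ws : seq (seq (bvert V)), size ws = n /\
   forall i, i < n -> witness E1 E2 M1 M2 (nth L1 ls i) (nth v0 (v0 :: vs) i)
         (nth v0 (v0 :: vs) i.+1) (nth [::] ws i).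
  elim=> [|n IH] hn; first by exists [::].
  have [ws [h1 h2]] := IH (ltnW hn).
  have [[s hs] _] := hadm n hn.
  exists (rcons ws s); split; first by rewrite size_rcons h1.
  move=> i hi; rewrite nth_rcons h1.
  case: ltnP => h; first exact: h2.
  have -> : i = n by lia.
  by rewrite eqxx.
have [ws [h1 h2]] := Hws _ (leqnn _).
exists ws; split => //; split => // i j hij hj hl e he1; apply/negP => he2.
have hi : i < size ls by lia.
have wi := h2 i hi; have ci := (hadm i hi).2.
rewrite hl in wi ci.
have [s hs] := join_witness ci (hadm j hj).2 wi (h2 j hj) he1 he2.
have := hmin _ _ _ (shortcut hC hij hj hl erefl hs).
rewrite size_cat size_takel /= ?size_drop; lia.
Qed.
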